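(* Let $s,t$ be real numbers with $t>0$ and $s>1+t$, and put \[ \mathcal{S}(s,t)=\sum_{p}\frac{p^s}{p^s-1}\cdot\frac{p^t}{p^s-1+p^t}\ln p,\qquad \mathcal{T}(s,t)=\sum_{p}\frac{p^t}{p^s-1+p^t}\ln p, \] where both sums run over all primes $p$. Let $a,b$ be coprime positive integers and $c=a+b$, and suppose that $c<R(c)^{\mathcal{S}(s,t)/\mathcal{T}(s,t)}$. Then \[ a+b<R(abc)^{2}. \]
   Context: For a positive integer $n$, $R(n)$ denotes the radical of $n$, i.e. the product of the distinct primes dividing $n$ (with $R(1)=1$). For $t>0$ and $s>1+t$ the two series defining $\mathcal{S}(s,t)$ and $\mathcal{T}(s,t)$ converge. *)

(* Defs.v *)
From Stdlib Require Import Reals.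
From Coquelicot Require Import Coquelicot.
From mathcomp Require Import ssreflect ssrfun ssrbool eqtype ssrnat seq prime bigop.

Definition rad (n : nat) : nat := (\prod_(p <- primes n) p)%N.

Open Scope R_scope.

Definition rpow (p : nat) (x : R) : R := Rpower (INR p) x.

Definition S_term (s t : R) (n : nat) : R :=
  if prime n then
    (rpow n s / (rpow n s - 1)) * (rpow n t / (rpow n s - 1 + rpow n t)) * ln (INR n)
  else 0.

Definition T_term (s t : R) (n : nat) : R :=
  if prime n then (rpow n t / (rpow n s - 1 + rpow n t)) * ln (INR n) else 0.

Definition SS (s t : R) : R := Series (S_term s t).
Definition TT (s t : R) : R := Series (T_term s t).

(* Main.v *)
Require Import Defs.
From Stdlib Require Import Reals Lra.
From Coquelicot Require Import Coquelicot.
From mathcomp Require Import ssreflect ssrfun ssrbool eqtype ssrnat seq prime bigop div.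

Local Open Scope R_scope.

Lemma INR2 : INR 2 = 2. Proof. simpl; lra. Qed.

Lemma rpow_ge n x : (2 <= n)%N -> 1 <= x -> 2 <= rpow n x.
Proof.
move=> hn hx. rewrite /rpow.
have h2 : 2 <= INR n by rewrite -INR2; apply: le_INR; apply/leP.
apply: (Rle_trans _ (INR n)); first exact: h2.
rewrite -{1}(Rpower_1 (INR n)); last lra.
apply: Rle_Rpower => //; lra.
Qed.

Lemma rpow_pos n x : (2 <= n)%N -> 0 < rpow n x.
Proof. move=> _; rewrite /rpow /Rpower; apply: exp_pos. Qed.

Lemma ln_pos n : (2 <= n)%N -> 0 < ln (INR n).
Proof.
move=> hn. have h2 : 2 <= INR n by rewrite -INR2; apply: le_INR; apply/leP.
rewrite -ln_1; apply: ln_increasing; lra.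
Qed.

Lemma terms s t n : 0 < t -> 1 + t < s ->
  0 <= T_term s t n /\ 0 <= S_term s t n <= 2 * T_term s t n.
Proof.
move=> ht hs. rewrite /S_term /T_term.
case: ifP => hp; last lra.
have hn : (2 <= n)%N by apply: prime_gt1.
have hX := rpow_ge n s hn ltac:(lra).
have hY := rpow_pos n t hn.
have hL := ln_pos n hn.
set X := rpow n s in hX *; set Y := rpow n t in hY *; set L := ln (INR n) in hL *.
have hq : 0 <= Y / (X - 1 + Y) * L.
  apply: Rmult_le_pos; last lra.
  apply: Rmult_le_pos; [lra|]. apply: Rlt_le; apply: Rinv_0_lt_compat; lra.
have hr : 0 <= X / (X - 1) <= 2.
  split. apply: Rmult_le_pos; [lra|]. apply: Rlt_le; apply: Rinv_0_lt_compat; lra.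
  apply (Rmult_le_reg_r (X - 1)); first lra.
  rewrite /Rdiv Rmult_assoc Rinv_l; lra.
split => //. rewrite Rmult_assoc. split.
  apply: Rmult_le_pos; lra.
apply: Rmult_le_compat_r => //; lra.
Qed.

Lemma series_bound s t : 0 < t -> 1 + t < s -> TT s t <> 0 ->
  0 < TT s t /\ SS s t <= 2 * TT s t.
Proof.
move=> ht hs hT.
have exT : ex_series (T_term s t).
  have hl : ex_lim_seq (sum_n (T_term s t)).
    apply: ex_lim_seq_incr => n; rewrite sum_Sn /plus /=.
    have [h1 _] := terms s t n.+1 ht hs. lra.
  move: hT; rewrite /TT /Series. have := Lim_seq_correct _ hl.
  case: (Lim_seq _) => [l| |] //= H _. exists l. exact H.
have h0 : 0 <= TT s t.
  have e := Series_scal_l 0 (T_term s t). rewrite Rmult_0_l in e.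
  rewrite -e /TT. apply: Series_le => // n.
  have [h1 _] := terms s t n ht hs. lra.
split; first lra.
rewrite /SS /TT -Series_scal_l. apply: Series_le.
  move=> n; have [_ h2] := terms s t n ht hs. lra.
apply: (ex_series_ext (fun n => scal 2 (T_term s t n))) => //.
by apply: ex_series_scal_l.
Qed.

Lemma prod_sub (s s' : seq nat) : uniq s -> uniq s' -> {subset s <= s'} ->
  (forall x, x \in s' -> 0 < x)%N -> (\prod_(i <- s) i <= \prod_(i <- s') i)%N.
Proof.
move=> us us' sub pos.
have pe : perm_eq ([seq x <- s' | x \in s] ++ [seq x <- s' | predC (mem s) x]) s'.
  by rewrite (perm_filterC (mem s) s').
rewrite -(perm_big _ pe) big_cat /=.
have -> : (\prod_(i <- [seq x <- s' | x \in s]) i = \prod_(i <- s) i)%N.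
  apply: perm_big; apply: uniq_perm; first exact: filter_uniq.
    done.
  move=> x; rewrite mem_filter; case hx: (x \in s) => //=.
  by rewrite (sub _ hx).
apply: leq_pmulr. rewrite big_seq. apply: prodn_cond_gt0 => i.
rewrite mem_filter => /andP [_ h]. exact: pos.
Qed.

Lemma rad_pos n : (0 < rad n)%N.
Proof.
rewrite /rad big_seq; apply: prodn_cond_gt0 => p.
rewrite mem_primes => /andP [hp _]. exact: prime_gt0.
Qed.

Lemma rad_le m n : (0 < n)%N -> (m %| n)%N -> (0 < m)%N -> (rad m <= rad n)%N.
Proof.
move=> hn hmn hm. apply: prod_sub; try exact: primes_uniq.
  move=> p; rewrite !mem_primes => /and3P [hp _ hpm].
  by rewrite hp hn (dvdn_trans hpm hmn).
move=> p; rewrite mem_primes => /andP [hp _]. exact: prime_gt0.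
Qed.

Theorem theorem2 (s t : R) (a b : nat) :
  (0 < t)%R -> (1 + t < s)%R ->
  (0 < a)%N -> (0 < b)%N -> coprime a b ->
  (INR (a + b) < Rpower (INR (rad (a + b))) (SS s t / TT s t))%R ->
  (a + b < (rad (a * b * (a + b))) ^ 2)%N.
Proof.
move=> ht hs ha hb hab hlt.
have hc2 : (2 <= a + b)%N by rewrite -(addn1 1) leq_add.
have hcR : 2 <= INR (a + b) by rewrite -INR2; apply: le_INR; apply/leP.
have hr0 := rad_pos (a + b).
have hR1 : 1 <= INR (rad (a + b)).
  rewrite -[1]/(INR 1). apply: le_INR; apply/leP; exact: hr0.
case: (Req_dec (TT s t) 0) => hT.
  rewrite hT /Rdiv Rinv_0 Rmult_0_r Rpower_O in hlt; lra.
have [hTp hST] := series_bound s t ht hs hT.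
have hq : SS s t / TT s t <= 2.
  apply (Rmult_le_reg_r (TT s t)) => //.
  rewrite /Rdiv Rmult_assoc Rinv_l //; lra.
have h1 : Rpower (INR (rad (a + b))) (SS s t / TT s t) <= INR (rad (a + b) * rad (a + b)).
  rewrite mult_INR.
  apply: (Rle_trans _ (Rpower (INR (rad (a + b))) (INR 2))).
    by apply: Rle_Rpower => //; rewrite INR2.
  rewrite Rpower_pow /=; lra.
have habc : (0 < a * b * (a + b))%N by rewrite !muln_gt0 ha hb addn_gt0 ha.
have hc0 : (0 < a + b)%N by rewrite addn_gt0 ha.
have hle := rad_le (a + b) _ habc (dvdn_mull _ (dvdnn _)) hc0.
have h2 : INR (a + b) < INR (rad (a * b * (a + b)) * rad (a * b * (a + b))).
  apply: (Rlt_le_trans _ _ _ hlt); apply: (Rle_trans _ _ _ h1).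
  apply: le_INR; apply/leP; exact: leq_mul.
rewrite -mulnn; apply/ltP; exact: INR_lt.
Qed.
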